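(* Let $\mathcal{O}$ be an $m$-dimensional pseudo USO with $m\geq 3$, with vertex set $[V,W]$, such that $V$ is a global sink of $\mathcal{O}$. Then $\mathcal{O}$ contains a directed cycle all of whose vertices are of the form $V\cup\{i\}$ or $V\cup\{i,j\}$ with $i,j\in W\setminus V$.
   Context: For sets $U,V$ let $U\oplus V=(U\cup V)\setminus(U\cap V)$, and for $U\subseteq W$ let $[U,W]=\{X: U\subseteq X\subseteq W\}$. A cube orientation is a directed graph with vertex set $[U,W]$ which, for every vertex $X$ and every $i\in W\setminus U$, contains exactly one of the directed edges $(X,X\oplus\{i\})$ and $(X\oplus\{i\},X)$; its dimension is $|W\setminus U|$. A face is the subgraph induced by a subinterval $[U',W']\subseteq[U,W]$; it is proper if $[U',W']\neq[U,W]$. A sink is a vertex with no outgoing edge. A pseudo USO is a cube orientation that does not have a unique global sink, but in which every proper face has a unique sink. *)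

(* Defs.v *)
From mathcomp Require Import all_boot.
Set Implicit Arguments. Unset Strict Implicit. Unset Printing Implicit Defensive.

Section Cube.
Variable T : finType.

Definition symdiff (A B : {set T}) : {set T} := (A :|: B) :\: (A :&: B).

Definition in_interval (U W X : {set T}) : bool := (U \subset X) && (X \subset W).

Definition cube_orientation (U W : {set T}) (E : rel {set T}) : Prop :=
  U \subset W /\
  (forall X Y, E X Y ->
     [/\ in_interval U W X, in_interval U W Y &
         exists2 i, i \in W :\: U & Y = symdiff X [set i]]) /\
  (forall X i, in_interval U W X -> i \in W :\: U ->
     E X (symdiff X [set i]) = ~~ E (symdiff X [set i]) X).

Definition dimension (U W : {set T}) : nat := #|W :\: U|.

Definition is_sink (U' W' : {set T}) (E : rel {set T}) (X : {set T}) : Prop :=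
  in_interval U' W' X /\ (forall Y, in_interval U' W' Y -> ~~ E X Y).

Definition unique_sink (U' W' : {set T}) (E : rel {set T}) : Prop :=
  exists X, is_sink U' W' E X /\ forall Y, is_sink U' W' E Y -> Y = X.

Definition face (U W U' W' : {set T}) : Prop :=
  [/\ U \subset U', U' \subset W' & W' \subset W].

Definition proper_face (U W U' W' : {set T}) : Prop :=
  face U W U' W' /\ ~ (U' = U /\ W' = W).

Definition pseudo_uso (U W : {set T}) (E : rel {set T}) : Prop :=
  [/\ cube_orientation U W E,
      ~ unique_sink U W E &
      forall U' W', proper_face U W U' W' -> unique_sink U' W' E].

Definition directed_cycle (E : rel {set T}) (s : seq {set T}) : Prop :=
  [/\ 2 <= size s, uniq s & cycle E s].

End Cube.

(* Main.v *)
Require Import Defs.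
From mathcomp Require Import all_boot.
From Stdlib Require Import Classical.
From mathcomp Require Import zify.
Set Implicit Arguments. Unset Strict Implicit. Unset Printing Implicit Defensive.

Lemma exists_cycle (A : finType) (e : rel A) (P : pred A) x0 :
  P x0 -> (forall x, P x -> exists y, P y && e x y) -> (forall x, ~~ e x x) ->
  exists s, [/\ 2 <= size s, uniq s, cycle e s & all P s].
Proof.
move=> Px0 succ irr.
have hf : forall x, {y | P x -> P y && e x y}.
  move=> x; case: (boolP (P x)) => Px; last by exists x.
  case: (pickP [pred y | P y && e x y]) => [y Hy|H]; first by exists y.
  exfalso; have [y Hy] := succ x Px; by move: (H y) => /=; rewrite Hy.
pose f x := sval (hf x).
have fP x : P x -> P (f x) && e x (f x) := svalP (hf x).
have iterP n : P (iter n f x0).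
  by elim: n => //= n IH; case/andP: (fP _ IH).
have : ~~ uniq (traject f x0 #|A|.+1).
  apply/negP => U; move/card_uniqP: U; rewrite size_traject => H.
  by have := max_card (mem (traject f x0 #|A|.+1)); rewrite H ltnn.
case/(uniqPn x0) => i [j [ij]]; rewrite size_traject => jN.
rewrite !nth_traject ?(ltn_trans ij jN) // => eqij.
pose x := iter i f x0.
have cyc : fcycle f (orbit f x).
  apply/(@orbitPcycle _ f x 0 3); exists (j - i).-1.
  rewrite prednK ?subn_gt0 //. rewrite /x -iterD subnK; last exact: ltnW. by []. 
have Px y : y \in orbit f x -> P y.
  by rewrite -fconnect_orbit => /iter_findex <-; rewrite /x -iterD; apply: iterP.
exists (orbit f x); split.
- rewrite size_orbit; move: cyc; rewrite /orbit.
  case: (order f x) (order_gt0 f x) => [|[|n]] // _ /=; rewrite andbT => /eqP fx.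
  have := fP x (Px x (in_orbit f x)); rewrite fx => /andP[_].
  by rewrite (negbTE (irr x)).
- exact: orbit_uniq.
- apply: (sub_in_cycle (P := P) (e := frel f)) => //.
    by move=> y z Py _ /= /eqP <-; case/andP: (fP _ Py).
  by apply/allP.
- by apply/allP.
Qed.

Section Aux.
Variable T : finType.

Lemma in_symdiff (A B : {set T}) k : (k \in symdiff A B) = ((k \in A) != (k \in B)).
Proof. by rewrite /symdiff !inE; case: (k \in A); case: (k \in B). Qed.

Lemma not_sink_edge (U W X : {set T}) (E : rel {set T}) :
  in_interval U W X -> ~ is_sink U W E X -> exists Y, in_interval U W Y /\ E X Y.
Proof.
move=> HX Hn; apply: NNPP => H; apply: Hn; split => // Y HY.
by apply/negP => e; apply: H; exists Y.
Qed.

Lemma sink_face (V W U' W' X : {set T}) (E : rel {set T}) :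
  is_sink V W E X -> face V W U' W' -> in_interval U' W' X -> is_sink U' W' E X.
Proof.
move=> [_ sX] [VU UW WW] HX; split => // Y /andP[UY YW]; apply: sX.
by rewrite /in_interval (subset_trans VU UY) (subset_trans YW WW).
Qed.

Lemma uniq_sink_eq (U W A B : {set T}) (E : rel {set T}) :
  unique_sink U W E -> is_sink U W E A -> is_sink U W E B -> A = B.
Proof. by move=> [Z [_ HZ]] /HZ -> /HZ ->. Qed.

End Aux.

Theorem lemma3p4 (T : finType) (V W : {set T}) (E : rel {set T}) (m : nat) :
  pseudo_uso V W E ->
  dimension V W = m -> 3 <= m ->
  is_sink V W E V ->
  exists s : seq {set T},
    directed_cycle E s /\
    (forall X, X \in s ->
       (exists2 i, i \in W :\: V & X = V :|: [set i]) \/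
       (exists i j, [/\ i \in W :\: V, j \in W :\: V & X = V :|: [set i; j]])).
Proof.
move=> [[VW [Edom Eor]] nuniq pf] dim m3 sinkV.
rewrite /dimension in dim.
set D := W :\: V in dim *.
have memD x : (x \in D) = (x \notin V) && (x \in W) by rewrite /D !inE.
have Ddef : W :\: V = D by [].
clearbody D.
have irr X : ~~ E X X.
  apply/negP => /Edom [_ _ [i _ eq]].
  by move/setP: eq => /(_ i); rewrite in_symdiff !inE eqxx; case: (i \in X).
have sinkW : is_sink V W E W.
  have [Y [sY nY]] : exists Y, is_sink V W E Y /\ Y <> V.
    apply: NNPP => H; apply: nuniq; exists V; split => // Y sY.
    by apply: NNPP => ne; apply: H; exists Y.
  have [eYW|neYW] := eqVneq Y W; first by move: sY; rewrite eYW.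
  have /andP[VY YW] := sY.1.
  have : ~~ (W \subset Y) by apply: contra neYW => WY; rewrite eqEsubset YW WY.
  case/subsetPn => k kW kY.
  have kV : k \notin V by apply: contra kY; apply: (subsetP VY).
  have fc : proper_face V W V (W :\ k).
    split; last by case => _ /setP /(_ k); rewrite !inE eqxx kW.
    split => //; last exact: subD1set.
    by apply/subsetP => x xV; rewrite !inE (subsetP VW x xV) andbT; apply: contraNneq kV => <-.
  have hu := pf _ _ fc.
  exfalso; apply: nY; apply: (uniq_sink_eq hu).
    apply: sink_face sY fc.1 _.
    by rewrite /in_interval VY subsetD1 YW kY.
  by apply: sink_face sinkV fc.1 _; rewrite /in_interval subxx subsetD1 VW kV.

have stepB i : i \in D -> exists2 j, (j \in D) && (j != i) & E (V :|: [set i]) (V :|: [set i; j]).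
  rewrite memD => /andP[iV iW].
  set X := V :|: [set i].
  have XW : X \subset W by rewrite /X subUset VW sub1set iW.
  have fc : proper_face V W X W.
    split; first by split => //; rewrite /X subsetUl.
    by move=> [/setP/(_ i)]; rewrite !inE eqxx orbT (negbTE iV).
  have hu := pf _ _ fc.
  have sW : is_sink X W E W by apply: sink_face sinkW fc.1 _; rewrite /in_interval XW subxx.
  have XneW : X != W.
    apply/eqP => XeW.
    have : D \subset [set i].
      apply/subsetP => k; rewrite memD => /andP[kV kW]; move: kW.
      by rewrite -XeW /X !inE (negbTE kV).
    by move/subset_leq_card; rewrite cards1 dim => h; have := leq_trans m3 h.
  have nsX : ~ is_sink X W E X.
    by move=> sX; apply: (negP XneW); apply/eqP; apply: (uniq_sink_eq hu sX sW).
  have [Y [/andP[XY YW] eXY]] := not_sink_edge (X:=X) (E:=E) (introT andP (conj (subxx X) XW)) nsX.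
  have [_ _ [j jD eY]] := Edom _ _ eXY; rewrite Ddef in jD.
  have jX : j \notin X.
    apply/negP => jX; have := subsetP XY j jX; by rewrite eY in_symdiff jX inE eqxx.
  move: (jX); rewrite /X !inE => /norP[jV jI].
  exists j; first by rewrite jD jI.
  suff -> : V :|: [set i; j] = Y by [].
  rewrite eY; apply/setP => k; rewrite in_symdiff /X !inE.
  case: (eqVneq k j) => [->|kj]; first by rewrite (negbTE jV) (negbTE jI) ?eqxx ?orbT.
  by rewrite ?(negbTE kj); case: (k \in V); case: (k == i).
have stepC i j : i \in D -> j \in D -> i != j ->
    exists2 k, (k \in D) && ((k == i) || (k == j)) & E (V :|: [set i; j]) (V :|: [set k]).
  move=> iD jD ij.
  move: (iD) (jD); rewrite !memD => /andP[iV iW] /andP[jV jW].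
  set X := V :|: [set i; j].
  have : 0 < #|D :\ i :\ j|.
    have h1 := cardsD1 i D; have h2 := cardsD1 j (D :\ i).
    rewrite iD dim in h1; rewrite !inE eq_sym ij jD /= in h2.
    rewrite h2 /= in h1; lia.
  case/card_gt0P => k; rewrite !inE memD => /andP[kj /andP[ki /andP[kV kW]]].
  have XW : X \subset W by rewrite /X !subUset VW !sub1set iW jW.
  have fc : proper_face V W V X.
    split; first by split => //; rewrite /X subsetUl.
    by move=> [_ /setP/(_ k)]; rewrite !inE (negbTE kV) (negbTE ki) (negbTE kj) kW.
  have hu := pf _ _ fc.
  have sV : is_sink V X E V by apply: sink_face sinkV fc.1 _; rewrite /in_interval subxx /X subsetUl.
  have nsX : ~ is_sink V X E X.
    move=> sX; have := uniq_sink_eq hu sX sV => /setP/(_ i).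
    by rewrite /X !inE eqxx orbT (negbTE iV).
  have [Y [/andP[VY YX] eXY]] := not_sink_edge (X:=X) (E:=E) (introT andP (conj (subsetUl V [set i; j]) (subxx X))) nsX.
  have [_ _ [l lD eY]] := Edom _ _ eXY; rewrite Ddef in lD.
  have lX : l \in X.
    apply: contraT => lX; have := subsetP YX l; rewrite eY in_symdiff (negbTE lX) inE eqxx => /(_ isT).
    by [].
  move: lX (lD); rewrite memD /X !inE => /orP[lV|/orP[/eqP li|/eqP lj]]; first by rewrite lV.
  - move=> _; exists j; first by rewrite jD eqxx orbT.
    suff -> : V :|: [set j] = Y by [].
    rewrite eY li; apply/setP => k'; rewrite in_symdiff !inE.
    case: (eqVneq k' i) => [->|ki']; first by rewrite (negbTE iV) (negbTE ij) eqxx.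
    by rewrite ?(negbTE ki'); case: (k' \in V); case: (k' == j).
  - move=> _; exists i; first by rewrite iD eqxx.
    suff -> : V :|: [set i] = Y by [].
    rewrite eY lj; apply/setP => k'; rewrite in_symdiff !inE.
    case: (eqVneq k' j) => [->|kj']; first by rewrite (negbTE jV) eq_sym (negbTE ij) eqxx.
    by rewrite ?(negbTE kj'); case: (k' \in V); case: (k' == i).
pose P := fun X => [exists i in D, X == V :|: [set i]] ||
  [exists i in D, exists j in D, (i != j) && (X == V :|: [set i; j])].
have [i0 i0D] : exists i0, i0 \in D.
  by apply/card_gt0P; rewrite dim; apply: leq_trans m3.
have Px0 : P (V :|: [set i0]).
  by apply/orP; left; apply/existsP; exists i0; rewrite i0D eqxx.
have succ : forall X, P X -> exists Y, P Y && E X Y.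
  move=> X /orP[/existsP[i /andP[iD /eqP->]] | /existsP[i /andP[iD /existsP[j /andP[jD /andP[ij /eqP->]]]]]].
  + have [j /andP[jD ji] e] := stepB i iD; exists (V :|: [set i; j]); rewrite e andbT.
    apply/orP; right; apply/existsP; exists i; rewrite iD; apply/existsP; exists j.
    by rewrite jD eq_sym ji eqxx.
  + have [k /andP[kD _] e] := stepC i j iD jD ij; exists (V :|: [set k]); rewrite e andbT.
    by apply/orP; left; apply/existsP; exists k; rewrite kD eqxx.
have [s [s2 us cs Ps]] := exists_cycle Px0 succ irr.
exists s; split; first by split.
move=> X /(allP Ps) /orP[/existsP[i /andP[iD /eqP->]] | /existsP[i /andP[iD /existsP[j /andP[jD /andP[ij /eqP->]]]]]].
  by left; exists i.
by right; exists i, j.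
Qed.
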